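(* Assume the setting in the context (Condition ASM). Fix $c>1$, $\bar c=(c+1)/(c-1)$, let $\widehat\beta$ be a LASSO solution, $\widehat T=\mathrm{support}(\widehat\beta)$ and $\widehat m=|\widehat T\setminus T|$. If $\lambda\geqslant c\,n\|S\|_\infty$, then $$\sqrt{\widehat m}\leqslant\sqrt s\,\sqrt{\phi(\widehat m)}\,\frac{2\bar c}{\kappa_{\bar c}}+3(\bar c+1)\sqrt{\phi(\widehat m)}\,\frac{n c_s}{\lambda},$$ where $c_s=0$ in the parametric case $f_i=x_i'\beta_0$.
   Context: Condition ASM: observations $(y_i,z_i)$, $i=1,\dots,n$, $z_i$ fixed, $y_i=f(z_i)+\varepsilon_i$, $\varepsilon_i$ i.i.d. $N(0,\sigma^2)$; $f_i=f(z_i)$, $\mathbb{E}_n[a_i]=n^{-1}\sum_ia_i$; $x_i=P(z_i)\in\mathbb{R}^p$ (including a constant) with $\mathbb{E}_n[x_{ij}^2]=1$. $\beta_0$ is any solution of $\min_\beta\mathbb{E}_n[(f_i-x_i'\beta)^2]+\sigma^2\|\beta\|_0/n$; $s=\|\beta_0\|_0$, $T=\mathrm{support}(\beta_0)$, $c_s=\sqrt{\mathbb{E}_n[(f_i-x_i'\beta_0)^2]}\leqslant K\sigma\sqrt{s/n}$ for an absolute constant $K$. $\|\delta\|_{2,n}=\sqrt{\mathbb{E}_n[(x_i'\delta)^2]}$; $S=2\mathbb{E}_n[x_i\varepsilon_i]$; LASSO: $\widehat\beta\in\arg\min_\beta\mathbb{E}_n[(y_i-x_i'\beta)^2]+\frac\lambda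 n\|\beta\|_1$. $\delta_A$ is $\delta$ with entries outside $A$ set to zero. $\kappa_C=\min\{\sqrt s\|\delta\|_{2,n}/\|\delta_T\|_1:\|\delta_{T^c}\|_1\leqslant C\|\delta_T\|_1,\delta_T\neq0\}$. Maximal sparse eigenvalue: $\phi(m)=\max\{\|\delta\|_{2,n}^2/\|\delta\|^2:\delta\neq0,\|\delta_{T^c}\|_0\leqslant m\}$. *)

(* Defs.v *)
From HB Require Import structures.
From mathcomp Require Import all_boot all_order all_algebra.
From mathcomp Require Import all_classical all_reals.
Set Implicit Arguments. Unset Strict Implicit. Unset Printing Implicit Defensive.
Import Order.TTheory GRing.Theory Num.Theory.
Local Open Scope ring_scope.
Local Open Scope classical_set_scope.

Section LassoDefs.
Variables (R : realType) (n p : nat).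

Definition En (a : 'I_n -> R) : R := (\sum_(i < n) a i) / n%:R.

Definition xb (X : 'M[R]_(n, p)) (i : 'I_n) (b : 'I_p -> R) : R :=
  \sum_(j < p) X i j * b j.

Definition norm2n (X : 'M[R]_(n, p)) (d : 'I_p -> R) : R :=
  Num.sqrt (En (fun i => (xb X i d) ^+ 2)).

Definition l1norm (b : 'I_p -> R) : R := \sum_(j < p) `|b j|.
Definition l2sq (b : 'I_p -> R) : R := \sum_(j < p) b j ^+ 2.
Definition supp (b : 'I_p -> R) : {set 'I_p} := [set j | b j != 0].
Definition l0norm (b : 'I_p -> R) : nat := #|supp b|.
Definition linfnorm (b : 'I_p -> R) : R := \big[Num.max/0]_(j < p) `|b j|.

Definition restr (A : {set 'I_p}) (d : 'I_p -> R) : 'I_p -> R :=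
  fun j => if j \in A then d j else 0.

Definition lasso_obj (X : 'M[R]_(n, p)) (y : 'I_n -> R) (lam : R)
  (b : 'I_p -> R) : R :=
  En (fun i => (y i - xb X i b) ^+ 2) + lam / n%:R * l1norm b.

Definition oracle_obj (X : 'M[R]_(n, p)) (f : 'I_n -> R) (sigma : R)
  (b : 'I_p -> R) : R :=
  En (fun i => (f i - xb X i b) ^+ 2) + sigma ^+ 2 * (l0norm b)%:R / n%:R.

Definition cs (X : 'M[R]_(n, p)) (f : 'I_n -> R) (b0 : 'I_p -> R) : R :=
  Num.sqrt (En (fun i => (f i - xb X i b0) ^+ 2)).

Definition score (X : 'M[R]_(n, p)) (eps : 'I_n -> R) : 'I_p -> R :=
  fun j => 2 * En (fun i => X i j * eps i).

(* restricted eigenvalue kappa_C (minimum taken as infimum) *)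
Definition kappa (X : 'M[R]_(n, p)) (T : {set 'I_p}) (C : R) : R :=
  inf [set k : R | exists d : 'I_p -> R,
         [/\ l1norm (restr (~: T) d) <= C * l1norm (restr T d),
             restr T d <> (fun _ => 0) &
             k = Num.sqrt (#|T|%:R) * norm2n X d / l1norm (restr T d)]].

(* maximal sparse eigenvalue phi(m) (maximum taken as supremum) *)
Definition phi (X : 'M[R]_(n, p)) (T : {set 'I_p}) (m : nat) : R :=
  sup [set r : R | exists d : 'I_p -> R,
         [/\ d <> (fun _ => 0),
             (l0norm (restr (~: T) d) <= m)%N &
             r = norm2n X d ^+ 2 / l2sq d]].

End LassoDefs.

(* Main.v *)
Require Import Defs.
From HB Require Import structures.
From mathcomp Require Import all_boot all_order all_algebra.
From mathcomp Require Import all_classical all_reals.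
From mathcomp Require Import ring lra.
Import Order.TTheory GRing.Theory Num.Theory.
Local Open Scope ring_scope.
Local Open Scope classical_set_scope.

Section Helpers.
Variable R : realType.

Lemma sum_CS (I : finType) (a b : I -> R) :
  (\sum_i a i * b i) ^+ 2 <= (\sum_i a i ^+ 2) * (\sum_i b i ^+ 2).
Proof.
set A := \sum_i a i ^+ 2; set B := \sum_i b i ^+ 2; set C := \sum_i a i * b i.
have B0 : 0 <= B by apply: sumr_ge0 => i _; exact: sqr_ge0.
have A0 : 0 <= A by apply: sumr_ge0 => i _; exact: sqr_ge0.
have key : 0 <= B * (A * B - C ^+ 2).
  have -> : B * (A * B - C ^+ 2) = \sum_i (B * a i - C * b i) ^+ 2.
    have -> : \sum_i (B * a i - C * b i) ^+ 2 =
      \sum_i (B ^+ 2 * a i ^+ 2 + (- (2 * B * C)) * (a i * b i) + C ^+ 2 * b i ^+ 2).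
      by apply: eq_bigr => i _; ring.
    rewrite !big_split /= -!mulr_sumr -/A -/B -/C; ring.
  by apply: sumr_ge0 => i _; exact: sqr_ge0.
have [Bz|Bp] := eqVneq B 0.
  have bz : forall i, b i = 0.
    move=> i; apply/eqP; rewrite -sqrf_eq0; apply/eqP.
    by apply: (psumr_eq0P (P := predT) (F := fun k => b k ^+ 2)) => // k _; exact: sqr_ge0.
  have -> : C = 0 by rewrite /C; apply: big1 => i _; rewrite bz mulr0.
  by rewrite expr0n /= mulr_ge0.
have Bpos : 0 < B by rewrite lt_def Bp B0.
nra.
Qed.

Lemma abs_le_sqrt (x u v : R) : 0 <= u -> 0 <= v -> x ^+ 2 <= u * v ->
  `|x| <= Num.sqrt u * Num.sqrt v.
Proof.
move=> u0 v0 h; rewrite -sqrtrM // -sqrtr_sqr ler_sqrt //; exact: mulr_ge0.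
Qed.

Lemma sum_CS_abs (I : finType) (a b : I -> R) :
  `|\sum_i a i * b i| <= Num.sqrt (\sum_i a i ^+ 2) * Num.sqrt (\sum_i b i ^+ 2).
Proof.
apply: abs_le_sqrt; last exact: sum_CS.
- by apply: sumr_ge0 => i _; exact: sqr_ge0.
- by apply: sumr_ge0 => i _; exact: sqr_ge0.
Qed.

Variable n : nat.
Implicit Types a b : 'I_n -> R.

Lemma eq_En a b : a =1 b -> En a = En b.
Proof. by move=> h; rewrite /En (eq_bigr _ (fun i _ => h i)). Qed.

Lemma EnD a b : En (fun i => a i + b i) = En a + En b.
Proof. by rewrite /En big_split mulrDl. Qed.

Lemma EnB a b : En (fun i => a i - b i) = En a - En b.
Proof. by rewrite /En sumrB mulrBl. Qed.

Lemma EnZ k a : En (fun i => k * a i) = k * En a.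
Proof. by rewrite /En -mulr_sumr mulrA. Qed.

Lemma En_ge0 a : (forall i, 0 <= a i) -> 0 <= En a.
Proof.
move=> h; rewrite /En; apply: divr_ge0; last exact: ler0n.
by apply: sumr_ge0 => i _.
Qed.

Lemma En_le a b : (forall i, a i <= b i) -> En a <= En b.
Proof.
move=> h; rewrite -subr_ge0 -EnB; apply: En_ge0 => i; by rewrite subr_ge0.
Qed.

Lemma En_CS a b : `|En (fun i => a i * b i)| <=
   Num.sqrt (En (fun i => a i ^+ 2)) * Num.sqrt (En (fun i => b i ^+ 2)).
Proof.
apply: abs_le_sqrt.
- by apply: En_ge0 => i; exact: sqr_ge0.
- by apply: En_ge0 => i; exact: sqr_ge0.
rewrite /En.
have := @sum_CS _ a b.
have N0 : 0 <= (n%:R : R)^-1 by rewrite invr_ge0 ler0n.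
move=> h. rewrite expr_div_n.
have -> : (\sum_i a i ^+ 2) / n%:R * ((\sum_i b i ^+ 2) / n%:R) =
   ((\sum_i a i ^+ 2) * (\sum_i b i ^+ 2)) / (n%:R ^+ 2) by rewrite expr2 invfM; ring.
apply: ler_wpM2r => //; by rewrite invr_ge0 sqr_ge0.
Qed.


Variable p : nat.
Variable X : 'M[R]_(n, p).

Lemma xbB i (b1 b2 : 'I_p -> R) :
  xb X i (fun j => b1 j - b2 j) = xb X i b1 - xb X i b2.
Proof. by rewrite /xb -sumrB; apply: eq_bigr => j _; rewrite mulrBr. Qed.

Lemma En_xb (d : 'I_p -> R) v :
  En (fun i => xb X i d * v i) = \sum_j d j * En (fun i => X i j * v i).
Proof.
rewrite /En /xb.
under eq_bigr do rewrite mulr_suml.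
rewrite exchange_big /= mulr_suml; apply: eq_bigr => j _.
rewrite mulrA mulr_sumr; congr (_ * _); apply: eq_bigr => i _; ring.
Qed.

Lemma xb_bump i (b : 'I_p -> R) j t :
  xb X i (fun k => b k - (k == j)%:R * t) = xb X i b - X i j * t.
Proof.
rewrite xbB; congr (_ - _); rewrite /xb (bigD1 j) //= eqxx big1 ?addr0; first by congr (_ * _); exact: mul1r.
by move=> k /negPf ->; rewrite mul0r mulr0.
Qed.

Lemma l1_bump (b : 'I_p -> R) j t : 0 <= t <= 1 ->
  l1norm (fun k => b k - (k == j)%:R * (t * b j)) = l1norm b - t * `|b j|.
Proof.
move=> /andP [t0 t1].
rewrite /l1norm (bigD1 j) //= [in RHS](bigD1 j) //= eqxx mul1r.
have -> : b j - t * b j = (1 - t) * b j by ring.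
rewrite normrM ger0_norm ?subr_ge0 //.
have -> : \sum_(i < p | i != j) `|b i - (i == j)%:R * (t * b j)| =
          \sum_(i < p | i != j) `|b i|.
  by apply: eq_bigr => k /negPf ->; rewrite mul0r subr0.
ring.
Qed.


Lemma l1_split (T : {set 'I_p}) (d : 'I_p -> R) :
  l1norm d = l1norm (restr T d) + l1norm (restr (~: T) d).
Proof.
rewrite /l1norm -big_split; apply: eq_bigr => j _; rewrite /restr !inE.
by case: (j \in T) => /=; rewrite normr0 ?addr0 ?add0r.
Qed.

Lemma l1_diff (b0 bh : 'I_p -> R) :
  l1norm b0 - l1norm bh <=
  l1norm (restr (supp b0) (fun j => bh j - b0 j))
  - l1norm (restr (~: supp b0) (fun j => bh j - b0 j)).
Proof.
rewrite /l1norm -!sumrB; apply: ler_sum => j _.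
rewrite /restr /supp !inE.
case: (eqVneq (b0 j) 0) => [->|_] /=.
  by rewrite subr0 normr0 sub0r.
rewrite normr0 subr0.
have := ler_normD (bh j - b0 j) (- bh j) . rewrite normrN.
have -> : bh j - b0 j + - bh j = - b0 j by ring.
rewrite normrN => h2; lra.
Qed.

Lemma limit_le {A B C : R} : 0 <= C ->
  (forall t, 0 < t -> t < 1 -> A <= B + t * C) -> A <= B.
Proof.
move=> C0 h; rewrite leNgt; apply/negP => BA.
set e := A - B.
have e0 : 0 < e by rewrite /e subr_gt0.
set t := e / (2 * (e + C)).
have eC : 0 < e + C by lra.
have t0 : 0 < t by rewrite /t divr_gt0 // mulr_gt0.
have tC : t * (2 * (e + C)) = e by rewrite /t mulfVK // mulf_neq0 // gt_eqF.
have t1 : t < 1.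
  have h2 : t * (2 * (e + C)) < 1 * (2 * (e + C)) by rewrite tC mul1r; lra.
  by rewrite ltr_pM2r ?mulr_gt0 // in h2.
have te : 0 < t * e by rewrite mulr_gt0.
have tC' : 2 * (t * e) + 2 * (t * C) = e by rewrite -[in RHS]tC; ring.
have := h t t0 t1; rewrite /e in te tC' *; lra.
Qed.

Lemma kkt (y : 'I_n -> R) lam (bh : 'I_p -> R) :
  (forall j, En (fun i => X i j ^+ 2) = 1) ->
  (forall b : 'I_p -> R, lasso_obj X y lam bh <= lasso_obj X y lam b) ->
  forall j, bh j != 0 ->
  lam / n%:R <= `|2 * En (fun i => X i j * (y i - xb X i bh))|.
Proof.
move=> nrm opt j bj.
set u := fun i => y i - xb X i bh.
set g := En (fun i => X i j * u i).
set L := lam / n%:R.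
have key : forall t, 0 < t -> t < 1 -> L * `|bh j| <= 2 * bh j * g + t * (bh j ^+ 2).
  move=> t t0 t1.
  have := opt (fun k => bh k - (k == j)%:R * (t * bh j)).
  rewrite /lasso_obj l1_bump; last by rewrite ltW // ltW.
  have -> : En (fun i => (y i - xb X i (fun k => bh k - (k == j)%:R * (t * bh j))) ^+ 2)
     = En (fun i => u i ^+ 2) + (2 * t * bh j) * g + (t * bh j) ^+ 2 * En (fun i => X i j ^+ 2).
    rewrite /g -!EnZ -!EnD; apply: eq_En => i; rewrite xb_bump /u; ring.
  rewrite nrm -/L mulr1 => H; nra.
have H := limit_le (sqr_ge0 (bh j)) key.
have H2 : 2 * bh j * g <= `|bh j| * `|2 * g|.
  by rewrite -normrM (_ : bh j * (2 * g) = 2 * bh j * g) ?ler_norm //; ring.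
have bp : 0 < `|bh j| by rewrite normr_gt0.
nra.
Qed.


Lemma l2sq_gt0 {d : 'I_p -> R} : d <> (fun _ => 0) -> 0 < l2sq d.
Proof.
move=> dn; have l0 : 0 <= l2sq d by apply: sumr_ge0 => j _; exact: sqr_ge0.
rewrite lt_def l0 andbT; apply/eqP => h; apply: dn; apply: funext => j.
apply/eqP; rewrite -sqrf_eq0; apply/eqP.
by apply: (psumr_eq0P (P := predT) (F := fun k => d k ^+ 2)) => // k _; exact: sqr_ge0.
Qed.

Lemma norm2n_sq (d : 'I_p -> R) : norm2n X d ^+ 2 = En (fun i => xb X i d ^+ 2).
Proof. by rewrite /norm2n sqr_sqrtr // En_ge0 // => i; exact: sqr_ge0. Qed.

Lemma phi_le (T : {set 'I_p}) m (a : 'I_p -> R) : a <> (fun _ => 0) ->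
  (l0norm (restr (~: T) a) <= m)%N ->
  norm2n X a ^+ 2 <= phi X T m * l2sq a /\ 0 <= phi X T m.
Proof.
move=> an am.
set E := [set r : R | exists d : 'I_p -> R,
         [/\ d <> (fun _ => 0),
             (l0norm (restr (~: T) d) <= m)%N &
             r = norm2n X d ^+ 2 / l2sq d]].
have ub : has_ubound E.
  exists (En (fun i => \sum_j X i j ^+ 2)) => r [d [dn _ ->]].
  have l2p := l2sq_gt0 dn.
  rewrite ler_pdivrMr // norm2n_sq mulrC -EnZ; apply: En_le => i.
  rewrite mulrC /xb /l2sq; idtac.
exact: (sum_CS _ (fun j => X i j) d).
have Ea : E (norm2n X a ^+ 2 / l2sq a) by exists a; split.
have h := ub_le_sup ub Ea.
have l2p := l2sq_gt0 an.
split; first by rewrite -ler_pdivrMr.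
apply: le_trans h; apply: divr_ge0; [exact: sqr_ge0 | exact: ltW].
Qed.

Lemma kappa_le (T : {set 'I_p}) C (d : 'I_p -> R) :
  l1norm (restr (~: T) d) <= C * l1norm (restr T d) ->
  restr T d <> (fun _ => 0) ->
  kappa X T C <= Num.sqrt (#|T|%:R) * norm2n X d / l1norm (restr T d).
Proof.
move=> hC hn.
set E := [set k : R | exists d : 'I_p -> R,
         [/\ l1norm (restr (~: T) d) <= C * l1norm (restr T d),
             restr T d <> (fun _ => 0) &
             k = Num.sqrt (#|T|%:R) * norm2n X d / l1norm (restr T d)]].
have lb : has_lbound E.
  exists 0 => k [d' [_ _ ->]].
  apply: divr_ge0; first exact: mulr_ge0 (sqrtr_ge0 _) (sqrtr_ge0 _).
  by apply: sumr_ge0 => j _.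
have Ed : E (Num.sqrt (#|T|%:R) * norm2n X d / l1norm (restr T d)) by exists d; split.
exact: ge_inf lb _ Ed.
Qed.

End Helpers.
Local Close Scope classical_set_scope.

Lemma final_alg (R : realFieldType) (c lam N Kp F ss cs0 : R) : c != 0 -> c - 1 != 0 -> N != 0 -> lam != 0 -> Kp != 0 ->
 ss * F * (2 * ((c+1)/(c-1)) / Kp) + 3 * ((c+1)/(c-1) + 1) * F * (N * cs0 / lam)
 = 2 * F * (3 * cs0 + (c+1) * (lam/N) * ss / (c * Kp)) / ((c - 1) * (lam/N) / c).
Proof. move=> h1 h2 h3 h4 h5; field. by rewrite h1 h2 h3 h4 h5. Qed.

Theorem lemma5 (R : realType) (n p : nat) (X : 'M[R]_(n, p))
  (f eps : 'I_n -> R) (sigma K : R) (b0 bhat : 'I_p -> R) (lam c : R) :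
  (0 < n)%N ->
  0 < sigma ->
  (* normalization E_n[x_ij^2] = 1 and a constant regressor *)
  (forall j : 'I_p, En (fun i => X i j ^+ 2) = 1) ->
  (exists j : 'I_p, forall i : 'I_n, X i j = 1) ->
  (* beta0 solves the oracle problem *)
  (forall b : 'I_p -> R, oracle_obj X f sigma b0 <= oracle_obj X f sigma b) ->
  cs X f b0 <= K * sigma * Num.sqrt ((l0norm b0)%:R / n%:R) ->
  (* bhat is a LASSO solution for y_i = f_i + eps_i *)
  (forall b : 'I_p -> R,
     lasso_obj X (fun i => f i + eps i) lam bhat
       <= lasso_obj X (fun i => f i + eps i) lam b) ->
  1 < c ->
  0 < lam ->
  c * n%:R * linfnorm (score X eps) <= lam ->
  let cbar := (c + 1) / (c - 1) in
  let T := supp b0 in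
  let s := l0norm b0 in
  let mhat := #|supp bhat :\: T| in
  0 < kappa X T cbar ->
  Num.sqrt (mhat%:R) <=
    Num.sqrt (s%:R) * Num.sqrt (phi X T mhat) * (2 * cbar / kappa X T cbar)
    + 3 * (cbar + 1) * Num.sqrt (phi X T mhat) * (n%:R * cs X f b0 / lam).
Proof.
move=> n0 sig0 nrm [j1 hj1] oracle hcs opt c1 lam0 hS cbar T s mhat kap0.
have N0 : 0 < (n%:R : R) by rewrite ltr0n.
set N := (n%:R : R) in N0 hS *.
have L0 : 0 < lam / N by rewrite divr_gt0.
set L := lam / N in L0.
set sinf := linfnorm (score X eps) in hS.
have sinf0 : 0 <= sinf.
  apply: le_trans (normr_ge0 (score X eps j1)) _; exact: le_bigmax.
have csL : c * sinf <= L.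
  by rewrite /L ler_pdivlMr // mulrAC.
set d := fun j => bhat j - b0 j.
set r := fun i => f i - xb X i b0.
set cs0 := cs X f b0.
have cs00 : 0 <= cs0 by exact: sqrtr_ge0.
set v := fun i => r i - xb X i d.
have hxb : forall i, xb X i bhat = xb X i b0 + xb X i d.
  by move=> i; rewrite /d xbB; ring.
have q0 : 0 <= norm2n X d by exact: sqrtr_ge0.
set A := l1norm (restr T d).
set B := l1norm (restr (~: T) d).
have A0 : 0 <= A by apply: sumr_ge0 => j _.
have B0 : 0 <= B by apply: sumr_ge0 => j _.
have main : norm2n X d ^+ 2 <= sinf * (A + B) + 2 * norm2n X d * cs0 + L * (A - B).
  have basic := opt b0; rewrite /lasso_obj -/N -/L in basic.
  have E1 : En (fun i => (f i + eps i - xb X i bhat) ^+ 2) =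
     En (fun i => (f i + eps i - xb X i b0) ^+ 2) + norm2n X d ^+ 2
     - 2 * En (fun i => xb X i d * eps i) - 2 * En (fun i => xb X i d * r i).
    rewrite norm2n_sq -!EnZ -EnD -!EnB; apply: eq_En => i; rewrite hxb /r; ring.
  have ES : 2 * En (fun i => xb X i d * eps i) = \sum_j d j * score X eps j.
    by rewrite En_xb mulr_sumr; apply: eq_bigr => j _; rewrite /score; ring.
  have Sb : `|\sum_j d j * score X eps j| <= sinf * (A + B).
    apply: le_trans (ler_norm_sum _ _ _) _.
    rewrite -l1_split /l1norm mulr_sumr; apply: ler_sum => j _.
    rewrite normrM mulrC; apply: ler_wpM2r; first exact: normr_ge0.
    exact: le_bigmax.
  have CSr : En (fun i => xb X i d * r i) <= norm2n X d * cs0.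
    apply: le_trans (ler_norm _) _; exact: En_CS.
  have F1 : L * l1norm b0 - L * l1norm bhat <= L * A - L * B.
    by rewrite -!mulrBr; apply: ler_wpM2l; [exact: ltW | exact: l1_diff].
  have Sb' := le_trans (ler_norm _) Sb.
  rewrite E1 in basic. lra.
set q := norm2n X d in q0 main.
set Kp := kappa X T cbar in kap0 *.
have c0 : 0 < c by lra.
have rate : c * Kp * (q - 2 * cs0) <= (c + 1) * L * Num.sqrt (s%:R).
  have ss0 := sqrtr_ge0 (s%:R : R).
  have RHS0 : 0 <= (c + 1) * L * Num.sqrt (s%:R) by apply: mulr_ge0 => //; apply: mulr_ge0; lra.
  case: (lerP q (2 * cs0)) => hq.
    apply: le_trans RHS0; rewrite mulr_ge0_le0 ?subr_le0 //; exact: ltW (mulr_gt0 c0 kap0).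
  have qp : 0 < q by lra.
  have pos : 0 < q * (q - 2 * cs0) by rewrite mulr_gt0 // subr_gt0.
  have h1 : c * (q * (q - 2 * cs0)) <= c * (sinf * (A + B)) + c * L * (A - B).
    have H := ler_wpM2l (ltW c0) main.
    have -> : c * (q * (q - 2 * cs0)) = c * q ^+ 2 - 2 * c * q * cs0 by ring.
    have -> : c * (sinf * (A + B)) + c * L * (A - B) =
      c * (sinf * (A + B) + 2 * q * cs0 + L * (A - B)) - 2 * c * q * cs0 by ring.
    by rewrite lerD2r.
  have h2 : c * (sinf * (A + B)) <= L * (A + B).
    by rewrite mulrA; apply: ler_wpM2r => //; lra.
  have h3 : c * (q * (q - 2 * cs0)) <= (c + 1) * L * A - (c - 1) * L * B.
    apply: le_trans h1 _.
    have -> : (c + 1) * L * A - (c - 1) * L * B = L * (A + B) + c * L * (A - B) by ring.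
    by rewrite lerD2r.
  have LB : 0 <= (c - 1) * L * B by apply: mulr_ge0 => //; apply: mulr_ge0; lra.
  have Apos : 0 < A.
    rewrite lt_def A0 andbT; apply/eqP => Az.
    have : 0 < (c + 1) * L * A.
      apply: lt_le_trans (_ : 0 < c * (q * (q - 2 * cs0))) _; first by rewrite mulr_gt0.
      lra.
    by rewrite Az mulr0 ltxx.
  have cone : B <= cbar * A.
    have h4 : (c - 1) * L * B <= (c + 1) * L * A.
      have : 0 < c * (q * (q - 2 * cs0)) by rewrite mulr_gt0.
      lra.
    rewrite /cbar mulrAC ler_pdivlMr; last lra.
    rewrite mulrC -(ler_pM2r L0); lra.
  have nz : restr T d <> (fun _ => 0).
    move=> hz; move: Apos; rewrite /A hz /l1norm big1 ?ltxx // => j _; exact: normr0.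
  have kl := @kappa_le _ _ _ X _ _ _ cone nz.
  have KA : Kp * A <= Num.sqrt (s%:R) * q.
    by rewrite -ler_pdivlMr.
  have h5 : c * (q * (q - 2 * cs0)) <= (c + 1) * L * A by lra.
  have h6 : Kp * (c * (q * (q - 2 * cs0))) <= Kp * ((c + 1) * L * A).
    by apply: ler_wpM2l => //; exact: ltW.
  have h7 : Kp * ((c + 1) * L * A) <= (c + 1) * L * (Num.sqrt (s%:R) * q).
    have -> : Kp * ((c + 1) * L * A) = (c + 1) * L * (Kp * A) by ring.
    apply: ler_wpM2l => //; apply: mulr_ge0; lra.
  have h8 : q * (c * Kp * (q - 2 * cs0)) <= q * ((c + 1) * L * Num.sqrt (s%:R)).
    have -> : q * (c * Kp * (q - 2 * cs0)) = Kp * (c * (q * (q - 2 * cs0))) by ring.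
    have -> : q * ((c + 1) * L * Num.sqrt (s%:R)) = (c + 1) * L * (Num.sqrt (s%:R) * q) by ring.
    exact: le_trans h7.
  by rewrite ler_pM2l in h8.
set M := supp bhat :\: T.
set w := fun j => 2 * En (fun i => X i j * v i).
set a := L - sinf.
have a0 : 0 < a by rewrite /a; nra.
have ca : (c - 1) * L <= c * a by rewrite /a; lra.
have wM : forall j, j \in M -> a <= `|w j|.
  move=> j; rewrite !inE => /andP [_ bj].
  have := @kkt _ _ _ X _ _ _ nrm opt _ bj.
  have -> : 2 * En (fun i => X i j * (f i + eps i - xb X i bhat)) = score X eps j + w j.
    rewrite /score /w -mulrDr -EnD; congr (_ * _); apply: eq_En => i.
    rewrite hxb /v /r; ring.
  rewrite -/N -/L => h.
  have := le_trans h (ler_normD _ _).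
  have : `|score X eps j| <= sinf by exact: le_bigmax.
  rewrite /a; lra.
set al := restr M w.
set P := l2sq al.
have hP1 : mhat%:R * a ^+ 2 <= P.
  rewrite /P /l2sq /mhat -/M.
  have -> : mhat%:R * a ^+ 2 = \sum_(j < p) (if j \in M then a ^+ 2 else 0).
    by rewrite -big_mkcond /= sumr_const mulr_natl.
  apply: ler_sum => j _; rewrite /al /restr; case: ifP => jM; last by rewrite expr0n.
  have := wM j jM => h.
  have : a ^+ 2 <= `|w j| ^+ 2 by have := normr_ge0 (w j); nra.
  by rewrite real_normK ?num_real.
have hP2 : P = 2 * En (fun i => xb X i al * v i).
  rewrite En_xb /P /l2sq mulr_sumr; apply: eq_bigr => j _.
  rewrite /al /restr /w; case: ifP => _; ring.
have hP3 : En (fun i => xb X i al * v i) <= norm2n X al * (cs0 + q).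
  have -> : En (fun i => xb X i al * v i) =
     En (fun i => xb X i al * r i) - En (fun i => xb X i al * xb X i d).
    by rewrite -EnB; apply: eq_En => i; rewrite /v; ring.
  have e1 : En (fun i => xb X i al * r i) <= norm2n X al * cs0.
    apply: le_trans (ler_norm _) _; exact: En_CS.
  have e2 : - En (fun i => xb X i al * xb X i d) <= norm2n X al * q.
    apply: le_trans (_ : _ <= `|En (fun i => xb X i al * xb X i d)|) _.
      by rewrite -normrN ler_norm.
    exact: En_CS.
  rewrite mulrDr; lra.
set F := Num.sqrt (phi X T mhat).
have F0 : 0 <= F by exact: sqrtr_ge0.
have cb0 : 0 < cbar by rewrite /cbar divr_gt0 //; lra.
have ss0 := sqrtr_ge0 (s%:R : R).
have RHS0 : 0 <= Num.sqrt (s%:R) * F * (2 * cbar / Kp)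
    + 3 * (cbar + 1) * F * (N * cs0 / lam).
  apply: addr_ge0; apply: mulr_ge0.
  - exact: mulr_ge0.
  - apply: divr_ge0; [lra | exact: ltW].
  - apply: mulr_ge0 => //; apply: mulr_ge0; lra.
  - apply: divr_ge0; [apply: mulr_ge0 => //; exact: ltW | exact: ltW].
case: (eqVneq mhat 0%N) => [m0|m0].
  by rewrite m0 mulr0n sqrtr0.
have Pp : 0 < P.
  apply: lt_le_trans hP1; apply: mulr_gt0; first by rewrite ltr0n lt0n.
  by rewrite exprn_gt0.
have aln : al <> (fun _ => 0).
  move=> h; move: Pp; rewrite /P h /l2sq big1 ?ltxx // => j _; by rewrite expr2 mulr0.
have l0al : (l0norm (restr (~: T) al) <= mhat)%N.
  rewrite /l0norm /mhat -/M; apply: subset_leq_card; apply/fintype.subsetP => j.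
  rewrite /supp inE /al /restr.
  case: (j \in M); first by [].
  by case: (j \in ~: T); rewrite eqxx.
have [hphi phi0] := @phi_le _ _ _ X T mhat al aln l0al.
set Q := norm2n X al in hP3 hphi.
have Q0 : 0 <= Q by exact: sqrtr_ge0.
have P0 : 0 <= P by exact: ltW.
have Q1 : Q <= F * Num.sqrt P.
  by rewrite -(ger0_norm Q0); apply: abs_le_sqrt.
have P2 : P <= 2 * Q * (cs0 + q).
  by rewrite hP2 -mulrA; apply: ler_wpM2l.
have sP0 : 0 < Num.sqrt P by rewrite sqrtr_gt0.
have S1 : Num.sqrt P <= 2 * F * (cs0 + q).
  have h : Num.sqrt P * Num.sqrt P <= Num.sqrt P * (2 * F * (cs0 + q)).
    rewrite -expr2 sqr_sqrtr //; apply: le_trans P2 _.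
    have -> : Num.sqrt P * (2 * F * (cs0 + q)) = 2 * (F * Num.sqrt P) * (cs0 + q) by ring.
    apply: ler_wpM2r; first lra.
    by apply: ler_wpM2l.
  by rewrite ler_pM2l in h.
have S2 : Num.sqrt (mhat%:R) * a <= Num.sqrt P.
  rewrite -(ger0_norm (ltW a0)) -sqrtr_sqr -sqrtrM ?ler0n // ler_sqrt //.
have cK0 : 0 < c * Kp by exact: mulr_gt0.
set Z := (c + 1) * L * Num.sqrt (s%:R) / (c * Kp).
have cKZ : c * Kp * Z = (c + 1) * L * Num.sqrt (s%:R).
  by rewrite /Z mulrC divfK // gt_eqF.
have qZ : q - 2 * cs0 <= Z by rewrite -(ler_pM2l cK0) cKZ.
set H := 2 * F * (3 * cs0 + Z).
have mH : Num.sqrt (mhat%:R) * a <= H.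
  apply: le_trans (le_trans S2 S1) _; rewrite /H -mulrA -[X in _ <= X]mulrA.
  apply: ler_wpM2l; first lra.
  apply: ler_wpM2l => //; lra.
have a1 : 0 < (c - 1) * L / c by apply: divr_gt0; [apply: mulr_gt0; lra | lra].
have aa : (c - 1) * L / c <= a by rewrite ler_pdivrMr // [a * c]mulrC.
have -> : Num.sqrt (s%:R) * F * (2 * cbar / Kp) + 3 * (cbar + 1) * F * (N * cs0 / lam)
   = H / ((c - 1) * L / c).
  rewrite /H /Z /cbar /L; apply: final_alg.
  - lra.
  - lra.
  - exact: lt0r_neq0.
  - lra.
  - exact: lt0r_neq0.
rewrite ler_pdivlMr //; apply: le_trans mH.
by apply: ler_wpM2l => //; exact: sqrtr_ge0.
Qed.
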